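(* Let $V$ be a finite-dimensional module over $\mathrm{QAWA}_2(A_R;z)$. Then every eigenvalue (in $\mathbb{K}$) of $x_2$ on $V$ is either an eigenvalue $\lambda$ of $x_1$ on $V$, or of the form $\gamma\lambda$ for some $\gamma\in\Gamma_R$ and some eigenvalue $\lambda$ of $x_1$ on $V$.
   Context: Let $\Bbbk$ be a commutative ring, $z\in\Bbbk^\times$, and $A$ a symmetric Frobenius superalgebra over $\Bbbk$ with even trace $\mathrm{tr}$, homogeneous basis $B_A$ and dual basis $\{b^\vee\}$, $\mathrm{tr}(b^\vee c)=\delta_{b,c}$. Let $\mathbb{K}\supseteq\Bbbk$ be an algebraically closed field and $R$ a finite-dimensional supercommutative superalgebra over $\mathbb{K}$; set $A_R:=R\otimes_\Bbbk A$ (a symmetric Frobenius superalgebra over $R$ with trace $\mathrm{id}\otimes\mathrm{tr}$). $\mathrm{QAWA}_2(A_R;z)$ is the $R$-superalgebra generated by $A_R\otimes_RA_R$ (factors numbered right to left, $a^{(1)}=1\otimes a$, $a^{(2)}=a\otimes1$), commuting even invertible $x_1,x_2$, and even $\sigma_1$, with relations $\sigma_1^2=z\tau_1\sigma_1+1$ where $\tau_1:=\sum_{b\in B_A}b\otimes b^\vee$, $\sigma_1\mathbf a=s_1(\mathbf a)\sigma_1$ ($s_1$ the superswap of the two factors), $\sigma_1x_1\sigma_1=x_2$, $x_i\mathbf a=\mathbf ax_i$. Let $m(w)\in\mathbb{K}[w]$ be the minimal polynomial of the $\mathbb{K}$-linear endomorphism of $A_R\otimes_RA_R$ given by left multiplication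 by $z\tau_1$. $\Gamma_R$ is the subgroup of $\mathbb{K}^\times$ generated by $\{\mu/(\mu-\eta):\mu,\eta\in\mathbb{K},\ m(\eta)=0,\ \mu^2-\mu\eta-1=0\}$. *)

(* Defs.v *)
From HB Require Import structures.
From mathcomp Require Import all_boot all_order all_algebra.
Set Implicit Arguments.
Unset Strict Implicit.
Unset Printing Implicit Defensive.
Import Order.TTheory GRing.Theory.
Local Open Scope ring_scope.

(* A (free, finite rank) superalgebra over a commutative ring T, given by a
   homogeneous basis indexed by the finType I:
     b_i b_j = \sum_l smul i j l b_l,   1 = \sum_l sone l b_l,
   and spar i = parity of b_i (true = odd). *)
Record salg (T : Type) (I : finType) := SAlg {
  spar : I -> bool;
  smul : I -> I -> I -> T;
  sone : I -> T }.

Definition sgn {T : pzRingType} (b : bool) : T := (-1) ^+ b.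

Definition is_salg (T : comNzRingType) (I : finType) (A : salg T I) : Prop :=
  [/\ (forall i j k l : I,
        \sum_m smul A i j m * smul A m k l = \sum_m smul A j k m * smul A i m l),
      (forall j l : I, \sum_m sone A m * smul A m j l = (j == l)%:R),
      (forall j l : I, \sum_m sone A m * smul A j m l = (j == l)%:R),
      (forall i j l : I, smul A i j l != 0 -> spar A l = spar A i (+) spar A j)
    & (forall l : I, sone A l != 0 -> spar A l = false)].

Definition is_supercomm (T : comNzRingType) (I : finType) (A : salg T I) : Prop :=
  forall i j l : I, smul A i j l = sgn (spar A i && spar A j) * smul A j i l.

(* tr (b_i b_j) for a trace given by its values tr_l = tr(b_l) *)
Definition trprod (T : comNzRingType) (I : finType) (A : salg T I) (tr : I -> T)
  (i j : I) : T := \sum_l smul A i j l * tr l.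

(* A is a symmetric Frobenius superalgebra with even trace tr and dual basis
   b_i^vee = \sum_l D i l b_l, i.e. tr(b_i^vee b_j) = delta_{ij}. *)
Definition is_symfrob (T : comNzRingType) (I : finType) (A : salg T I)
  (tr : I -> T) (D : I -> I -> T) : Prop :=
  [/\ is_salg A,
      (forall l : I, spar A l -> tr l = 0),
      (forall i j : I, trprod A tr i j = sgn (spar A i && spar A j) * trprod A tr j i)
    & (forall i j : I, \sum_l D i l * trprod A tr l j = (i == j)%:R)].

Section Tensor.
Variables (K : fieldType) (k : comNzRingType) (f : k -> K).
Variables (IR IA : finType) (R : salg K IR) (A : salg k IA).

(* Basis of A_R (x)_R A_R  ~=  R (x)_K A_K (x)_K A_K : the element (s,i,j)
   stands for e_s (x) b_i (x) b_j, i.e. (e_s (x) b_i) (x) (1 (x) b_j), so b_i is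
   in the left factor (position 2) and b_j in the right one (position 1). *)
Definition J := (IR * IA * IA)%type.

Local Notation AA := {ffun J -> K}.

Definition AAconst (a b c : J) : K :=
  let: (s, i, j) := a in let: (t, k', l) := b in let: (u, m, o) := c in
  sgn (spar R t && (spar A i (+) spar A j)) * sgn (spar A k' && spar A j) *
  smul R s t u * f (smul A i k' m) * f (smul A j l o).

Definition AAmul (x y : AA) : AA :=
  [ffun c => \sum_a \sum_b x a * y b * AAconst a b c].

Definition AAone : AA :=
  [ffun c : J => let: (u, m, o) := c in sone R u * f (sone A m) * f (sone A o)].

(* tau_1 = sum_b b (x) b^vee *)
Definition AAtau (D : IA -> IA -> k) : AA :=
  [ffun c : J => let: (u, m, o) := c in sone R u * f (D m o)].

Definition AAztau (z : k) (D : IA -> IA -> k) : AA :=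
  [ffun c : J => f z * AAtau D c].

Definition AAswap (x : AA) : AA :=
  [ffun c : J => let: (u, m, o) := c in
     sgn (spar A m && spar A o) * x (u, o, m)].

Definition AAeval (c : AA) (p : {poly K}) (x : AA) : AA :=
  [ffun e => \sum_(n < size p) p`_n * iter n (AAmul c) x e].

Definition is_minpoly_lmul (c : AA) (m : {poly K}) : Prop :=
  [/\ m \is monic,
      (forall x, AAeval c m x = 0)
    & (forall p : {poly K}, (forall x, AAeval c p x = 0) -> (m %| p)%R)].

Definition rhoE (d : nat) (rho : J -> 'M[K]_d) (x : AA) : 'M[K]_d :=
  \sum_a x a *: rho a.

(* V = K^d (column vectors) is a left module over QAWA_2(A_R; z), given by the
   action rho of A_R (x)_R A_R and the matrices of x_1, x_2, sigma_1. *)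
Definition is_QAWA2_module (z : k) (D : IA -> IA -> k) (d : nat)
  (rho : J -> 'M[K]_d) (X1 X2 S : 'M[K]_d) : Prop :=
  [/\ rhoE rho AAone = 1%:M
      /\ (forall x y : AA, rhoE rho (AAmul x y) = rhoE rho x *m rhoE rho y),
      S *m S = f z *: (rhoE rho (AAtau D) *m S) + 1%:M,
      (forall x : AA, S *m rhoE rho x = rhoE rho (AAswap x) *m S),
      S *m X1 *m S = X2
    & [/\ X1 \in unitmx, X2 \in unitmx, X1 *m X2 = X2 *m X1
        & (forall x : AA, X1 *m rhoE rho x = rhoE rho x *m X1 /\
                          X2 *m rhoE rho x = rhoE rho x *m X2)]].
End Tensor.

Definition is_eigval (K : fieldType) (d : nat) (M : 'M[K]_d) (a : K) : Prop :=
  exists2 v : 'cV[K]_d, v != 0 & M *m v = a *: v.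

Inductive in_gen_subgroup (K : fieldType) (G0 : K -> Prop) : K -> Prop :=
| igs_one : in_gen_subgroup G0 1
| igs_mul : forall g x, G0 g -> in_gen_subgroup G0 x -> in_gen_subgroup G0 (g * x)
| igs_inv : forall g x, G0 g -> in_gen_subgroup G0 x -> in_gen_subgroup G0 (g^-1 * x).

Definition GammaGen (K : fieldType) (m : {poly K}) (g : K) : Prop :=
  exists mu eta : K, [/\ root m eta, mu ^+ 2 - mu * eta - 1 = 0 & g = mu / (mu - eta)].

Definition Gamma (K : fieldType) (m : {poly K}) : K -> Prop :=
  in_gen_subgroup (GammaGen m).

(* Main.v *)
Require Import Defs.
From HB Require Import structures.
From mathcomp Require Import all_boot all_order all_algebra.
From mathcomp Require Import ring.
Import GRing.Theory.
Local Open Scope ring_scope.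
Lemma stable_eig (K : closedFieldType) n (E M : 'M[K]_n) :
  E != 0 -> (E *m M <= E)%MS -> exists a, (E :&: eigenspace M a)%MS != 0.
Proof.
move=> E0 EM.
set B := row_base E.
have BsE : (B <= E)%MS by rewrite eq_row_base.
have EsB : (E <= B)%MS by rewrite eq_row_base.
have BM : (B *m M <= B)%MS.
  by apply: submx_trans EsB; apply: submx_trans EM; apply: submxMr.
set C := B *m M *m pinvmx B.
have : size (char_poly C) != 1%N.
  by rewrite size_char_poly eqSS mxrank_eq0.
case/closed_rootP => a; rewrite -eigenvalue_root_char => /eigenvalueP [x xC x0].
exists a; rewrite -submx0; apply/negP => H0.
have xB : (x *m B <= (E :&: eigenspace M a))%MS.
  rewrite sub_capmx; apply/andP; split.
    exact: submx_trans (submxMl _ _) BsE.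
  apply/eigenspaceP.
  by rewrite -mulmxA -(mulmxKpV BM) -/C mulmxA xC scalemxAl.
have : (x *m B <= (0 : 'M_n))%MS by apply: submx_trans H0.
by rewrite submx0 mulmx_free_eq0 ?row_base_free // (negbTE x0).
Qed.

Lemma eig_stable (K : fieldType) n m (E : 'M[K]_(m,n)) N P a :
  N *m P = P *m N -> (E <= eigenspace P a)%MS -> (E *m N <= eigenspace P a)%MS.
Proof.
move=> NP /eigenspaceP EP; apply/eigenspaceP.
by rewrite -mulmxA NP mulmxA EP -scalemxAl.
Qed.

Lemma tr_eig (K : fieldType) n (M : 'M[K]_n) (r : 'rV_n) c :
  r *m M^T = c *: r -> M *m r^T = c *: r^T.
Proof. by move=> H; rewrite -[M]trmxK -trmx_mul H linearZ. Qed.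

Lemma common_eig (K : closedFieldType) n (M1 M2 M3 : 'M[K]_n) mu :
  M1 *m M2 = M2 *m M1 -> M1 *m M3 = M3 *m M1 -> M2 *m M3 = M3 *m M2 ->
  (exists2 v : 'cV_n, v != 0 & M2 *m v = mu *: v) ->
  exists lam eta, exists2 v : 'cV_n, v != 0 &
    [/\ M1 *m v = lam *: v, M2 *m v = mu *: v & M3 *m v = eta *: v].
Proof.
move=> c12 c13 c23 [v v0 hv].
have tc : forall A B : 'M[K]_n, A *m B = B *m A -> A^T *m B^T = B^T *m A^T.
  by move=> A B AB; rewrite -!trmx_mul AB.
set E2 := eigenspace M2^T mu.
have E20 : E2 != 0.
  apply/negP => /eqP E20.
  have : (v^T <= E2)%MS.
    by apply/eigenspaceP; rewrite -trmx_mul hv linearZ.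
  by rewrite E20 submx0 trmx_eq0 (negbTE v0).
have [lam H12] : exists lam, (E2 :&: eigenspace M1^T lam)%MS != 0.
  apply: (@stable_eig K n E2 M1^T E20); apply: eig_stable (submx_refl _).
  exact: tc.
set E12 := (E2 :&: eigenspace M1^T lam)%MS in H12.
have [eta H3] : exists eta, (E12 :&: eigenspace M3^T eta)%MS != 0.
  apply: (@stable_eig K n E12 M3^T H12); rewrite sub_capmx; apply/andP; split.
    by apply: eig_stable (capmxSl _ _); apply: tc.
  by apply: eig_stable (capmxSr _ _); apply: tc.
set r := nz_row (E12 :&: eigenspace M3^T eta)%MS.
have rE : (r <= E12 :&: eigenspace M3^T eta)%MS by apply: nz_row_sub.
have r0 : r != 0 by rewrite nz_row_eq0.
exists lam, eta, r^T; first by rewrite trmx_eq0.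
split; apply: tr_eig; apply/eigenspaceP.
- exact: submx_trans rE (submx_trans (capmxSl _ _) (capmxSr _ _)).
- exact: submx_trans rE (submx_trans (capmxSl _ _) (capmxSl _ _)).
- exact: submx_trans rE (capmxSr _ _).
Qed.

Lemma rhoE_scale (K : fieldType) (IR IA : finType) d (rho : J IR IA -> 'M[K]_d)
  (a : K) (x : {ffun J IR IA -> K}) :
  rhoE rho [ffun e => a * x e] = a *: rhoE rho x.
Proof.
rewrite /rhoE scaler_sumr; apply: eq_bigr => e _.
by rewrite ffunE scalerA.
Qed.

Lemma rhoE0 (K : fieldType) (IR IA : finType) d (rho : J IR IA -> 'M[K]_d) :
  rhoE rho 0 = 0.
Proof. by rewrite /rhoE big1 // => e _; rewrite ffunE scale0r. Qed.

Lemma rhoE_sum (K : fieldType) (IR IA : finType) d (rho : J IR IA -> 'M[K]_d)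
  (N : nat) (p : nat -> K) (y : nat -> {ffun J IR IA -> K}) :
  rhoE rho [ffun e => \sum_(n < N) p n * y n e] =
  \sum_(n < N) p n *: rhoE rho (y n).
Proof.
rewrite /rhoE.
under eq_bigr do rewrite ffunE scaler_suml.
rewrite exchange_big /=; apply: eq_bigr => n _.
by rewrite scaler_sumr; apply: eq_bigr => e _; rewrite scalerA.
Qed.

Lemma scal_v0 (K : fieldType) d (v : 'cV[K]_d) (a b : K) :
  v != 0 -> a *: v = b *: v -> a = b.
Proof.
move=> v0 /eqP; rewrite -subr_eq0 -scalerBl scalemx_eq0 (negbTE v0) orbF subr_eq0.
by move/eqP.
Qed.
Arguments scal_v0 {K d v a b}.

Theorem lemma8p3
  (K : closedFieldType) (k : comUnitRingType) (f : {rmorphism k -> K})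
  (f_inj : injective f) (z : k) (z_unit : z \is a GRing.unit)
  (IA : finType) (A : salg k IA) (trA : IA -> k) (DA : IA -> IA -> k)
  (A_symfrob : is_symfrob A trA DA)
  (IR : finType) (R : salg K IR) (R_salg : is_salg R) (R_scomm : is_supercomm R)
  (m : {poly K})
  (m_min : is_minpoly_lmul f R A (AAztau f R z DA) m)
  (d : nat) (rho : J IR IA -> 'M[K]_d) (X1 X2 S : 'M[K]_d)
  (V_mod : is_QAWA2_module f R A z DA rho X1 X2 S) :
  forall mu : K, is_eigval X2 mu ->
    exists lambda : K, is_eigval X1 lambda /\
      (mu = lambda \/ exists2 gamma : K, Gamma m gamma & mu = gamma * lambda).
Proof.
move=> mu hmu.
case: V_mod => [[h1 hmul] hSS hSx hX2 [u1 u2 c12 hcomm]].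
set T := rhoE rho (AAztau f R z DA).
have hT : T = f z *: rhoE rho (AAtau f R DA) by rewrite /T rhoE_scale.
have c1T : X1 *m T = T *m X1 := (hcomm _).1.
have c2T : X2 *m T = T *m X2 := (hcomm _).2.
have [lam [eta [v v0 [e1 e2 e3]]]] := @common_eig _ _ X1 X2 T mu c12 c1T c2T hmu.
have rootm : root m eta.
  case: m_min => _ hm _.
  have := hm (AAone f R A).
  move/(congr1 (fun x => rhoE rho x *m v)).
  rewrite /AAeval rhoE_sum rhoE0 mul0mx mulmx_suml.
  have iterv : forall n, rhoE rho (iter n (AAmul f R A (AAztau f R z DA))
                   (AAone f R A)) *m v = eta ^+ n *: v.
    elim => [|n IH] /=; first by rewrite h1 mul1mx expr0 scale1r.
    by rewrite hmul -mulmxA IH -scalemxAr e3 scalerA -exprSr.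
  under eq_bigr do rewrite -scalemxAl iterv scalerA.
  rewrite -scaler_suml -horner_coef => H.
  have H' : 0 *: v = m.[eta] *: v by rewrite scale0r.
  by rewrite /root -(scal_v0 v0 H').
have hSS' : S *m S = T *m S + 1%:M by rewrite hSS hT scalemxAl.
have hSi : (S - T) *m S = 1%:M by rewrite mulmxBl hSS' addrAC subrr add0r.
have hX1S : X1 *m S = (S - T) *m X2.
  by rewrite -hX2 !mulmxA hSi mul1mx.
set w := S *m v.
have ew : X1 *m w = mu *: w - (mu * eta) *: v.
  by rewrite /w mulmxA hX1S -mulmxA e2 -scalemxAr mulmxBl e3 scalerBr scalerA.
have v_eig : is_eigval X1 lam by exists v.
have [lm|nlm] := eqVneq lam mu.
  by exists lam; split => //; left.
set a := mu * eta / (lam - mu).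
have lm0 : lam - mu != 0 by rewrite subr_eq0.
set u := w + a *: v.
have eu : X1 *m u = mu *: u.
  rewrite /u mulmxDr ew -scalemxAr e1 scalerA scalerDr scalerA -addrA.
  congr (_ + _); rewrite -scaleNr -scalerDl; congr (_ *: _).
  by rewrite /a; field.
have [u0|un0] := eqVneq u 0; last first.
  by exists mu; split; [exists u | left].
set c := - a.
have hSv : S *m v = c *: v.
  by apply/eqP; rewrite -/w /c scaleNr -addr_eq0 -/u u0.
clearbody c.
have hc2 : c * c - (c * eta + 1) = 0.
  have E1 : S *m (S *m v) = (c * c) *: v by rewrite hSv -scalemxAr hSv scalerA.
  have E2 : S *m (S *m v) = (c * eta + 1) *: v.
    by rewrite mulmxA hSS' mulmxDl mul1mx -mulmxA hSv -scalemxAr e3 scalerA scalerDl scale1r.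
  by rewrite (scal_v0 v0 (etrans (esym E1) E2)) subrr.
have hcl : c * lam - (mu * c - mu * eta) = 0.
  have E3 : X1 *m w = (c * lam) *: v by rewrite /w hSv -scalemxAr e1 scalerA.
  have E4 : X1 *m w = (mu * c - mu * eta) *: v by rewrite ew /w hSv scalerA scalerBl.
  by rewrite (scal_v0 v0 (etrans (esym E3) E4)) subrr.
have hce : c - eta != 0.
  apply/negP => /eqP hce.
  have : c * (c - eta) = 1.
    have -> : c * (c - eta) = c * c - (c * eta + 1) + 1 by ring.
    by rewrite hc2 add0r.
  by rewrite hce mulr0 => /eqP; rewrite eq_sym oner_eq0.
exists lam; split => //; right; exists (c / (c - eta)).
  rewrite /Gamma -[c / (c - eta)]mulr1; apply: igs_mul (igs_one _).
  exists c, eta; split => //.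
  have -> : c ^+ 2 - c * eta - 1 = c * c - (c * eta + 1) by ring.
  exact: hc2.
apply/eqP; rewrite -subr_eq0; apply/eqP.
have -> : mu - c / (c - eta) * lam = (mu * (c - eta) - c * lam) / (c - eta).
  by field.
have -> : mu * (c - eta) - c * lam = 0.
  have -> : mu * (c - eta) - c * lam = - (c * lam - (mu * c - mu * eta)) by ring.
  by rewrite hcl oppr0.
by rewrite mul0r.
Qed.
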